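(* Every tubal tensor $\mathcal A\in\mathbb{C}_p^{I_1\times\cdots\times I_N}$ can be written as $$\mathcal A=\mathcal S*_1\mathcal U_1*_2\mathcal U_2\cdots*_N\mathcal U_N,$$ where (1) each $\mathcal U_n\in\mathbb{C}_p^{I_n\times I_n}$ is unitary, and (2) $\mathcal S\in\mathbb{C}_p^{I_1\times\cdots\times I_N}$ is all-orthogonal: for all $1\le n\le N$ and all $1\le\alpha\neq\beta\le I_n$, $$\sum_{i_1,\dots,i_{n-1},i_{n+1},\dots,i_N}\mathcal S(i_1,\dots,i_{n-1},\alpha,i_{n+1},\dots,i_N)^H*\mathcal S(i_1,\dots,i_{n-1},\beta,i_{n+1},\dots,i_N)=\mathbf 0.$$ Moreover, if $L=cW$ with $c\in\mathbb{C}\setminus\{0\}$ and $W\in\mathbb{C}^{p\times p}$ a unitary matrix, then $\mathcal U_n$ and $\mathcal S$ can be chosen so that in addition the ordering property holds: for every $n$, $\|\mathcal S_{i_n=1}\|\ge\|\mathcal S_{i_n=2}\|\ge\cdots\ge\|\mathcal S_{i_n=I_n}\|$, where $\mathcal S_{i_n=\alpha}$ is the subtensor of $\mathcal S$ obtained by fixing the $n$-th index to $\alpha$ (equivalently the $\alpha$-th row of $\mathcal S_{(n)}$).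
   Context: Fix an integer $p\ge1$ and an invertible linear map $L:\mathbb{C}^p\to\mathbb{C}^p$. A tubal scalar is an element of $\mathbb{C}_p:=\mathbb{C}^p$; $\mathbf 0$ is the zero tubal scalar. The tensor-tensor product of tubal scalars is $\mathbf a*\mathbf b=L^{-1}(L(\mathbf a)\odot L(\mathbf b))$, where $\odot$ is the componentwise product. A tubal matrix $\mathcal A\in\mathbb{C}_p^{I\times J}$ is an $I\times J$ array of tubal scalars (identified with an array in $\mathbb{C}^{I\times J\times p}$); its $k$-th frontal slice $\mathcal A^{(k)}$ has entries $\mathcal A(i,j)^{(k)}$, and $L(\mathcal A)$ is obtained by applying $L$ to every entry. For $\mathcal A\in\mathbb{C}_p^{I\times J}$, $\mathcal B\in\mathbb{C}_p^{J\times K}$, $(\mathcal A*\mathcal B)(i,k)=\sum_j\mathcal A(i,j)*\mathcal B(j,k)$; equivalently $L(\mathcal A*\mathcal B)^{(k)}=L(\mathcal A)^{(k)}L(\mathcal B)^{(k)}$. The identity $\mathcal I_I$ has $L(\mathcal I_I)^{(k)}$ equal to the identity matrix for all $k$. The Hermitian transpose is defined by $L(\mathcal A^H)^{(k)}=(L(\mathcal A)^{(k)})^H$ (for a tubal scalar, viewed as a $1\times1$ tubal matrix). $\mathcal A\in\mathbb{C}_p^{I\times I}$ is unitary if $\mathcal A*\mathcal A^H=\mathcal A^H*\mathcal A=\mathcal I_I$. A tubal tensor $\mathcal A\in\mathbb{C}_p^{I_1\times\cdots\times I_N}$ is an $N$-way array of tubal scalars. Its mode-$n$ unfolding $\mathcal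 A_{(n)}\in\mathbb{C}_p^{I_n\times\prod_{m\neq n}I_m}$ has $\mathcal A_{(n)}(i_n,j)=\mathcal A(i_1,\dots,i_N)$, where $j=1+\sum_{k\neq n}(i_k-1)\prod_{m<k,\,m\neq n}I_m$. For $\mathcal U\in\mathbb{C}_p^{J\times I_n}$, the $n$-mode product is $(\mathcal A*_n\mathcal U)(i_1,\dots,i_{n-1},j,i_{n+1},\dots,i_N)=\sum_{i_n}\mathcal A(i_1,\dots,i_N)*\mathcal U(j,i_n)$; repeated mode products are evaluated left to right. $\|\cdot\|$ denotes the Frobenius norm (Euclidean norm of all complex entries of the underlying array). *)

(* Defs.v *)
(* The complex field is modelled as R[i] (real_closed's
   [complex R]) for an arbitrary real closed field R; taking R = the reals
   gives the usual C. *)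
From HB Require Import structures.
From mathcomp Require Import all_boot all_order all_algebra.
From mathcomp Require Export complex.
Set Implicit Arguments.
Unset Strict Implicit.
Unset Printing Implicit Defensive.
Import Order.TTheory GRing.Theory Num.Theory.
Local Open Scope ring_scope.

Section Tubal.
Variables (R : rcfType) (p : nat) (L : 'M[R[i]]_p).
Local Notation C := R[i].

Definition tscal := 'cV[C]_p.

Definition tmul (a b : tscal) : tscal :=
  invmx L *m \col_k ((L *m a) k 0 * (L *m b) k 0).

Definition tconj (a : tscal) : tscal :=
  invmx L *m map_mx (fun z : C => z^*) (L *m a).

Definition tone : tscal := invmx L *m const_mx 1.

Definition tmat (m n : nat) := 'I_m -> 'I_n -> tscal.

Definition tmatmul m n k (A : tmat m n) (B : tmat n k) : tmat m k :=
  fun i l => \sum_(j < n) tmul (A i j) (B j l).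

Definition tmatH m n (A : tmat m n) : tmat n m := fun i j => tconj (A j i).

Definition tident n : tmat n n := fun i j => if i == j then tone else 0.

Definition tunitary n (U : tmat n n) : Prop :=
  (forall i j, tmatmul U (tmatH U) i j = @tident n i j) /\
  (forall i j, tmatmul (tmatH U) U i j = @tident n i j).

Variables (N : nat) (I : 'I_N -> nat).
Definition tidx := {dffun forall n : 'I_N, 'I_(I n)}.
Definition ttensor := tidx -> tscal.

Definition modeprod (A : ttensor) (n : 'I_N) (U : tmat (I n) (I n)) : ttensor :=
  fun i => \sum_(j : tidx | [forall m, (m != n) ==> (j m == i m)])
             tmul (A j) (U (i n) (j n)).

Definition modeprod_all (S : ttensor) (U : forall n : 'I_N, tmat (I n) (I n))
  : ttensor :=
  foldl (fun T n => modeprod T (U n)) S (enum 'I_N).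

Definition all_orthogonal (S : ttensor) : Prop :=
  forall (n : 'I_N) (a b : 'I_(I n)), a != b ->
    \sum_(i : tidx | i n == a)
      \sum_(j : tidx | (j n == b) && [forall m, (m != n) ==> (j m == i m)])
        tmul (tconj (S i)) (S j) = 0.

Definition slice_norm (S : ttensor) (n : 'I_N) (a : 'I_(I n)) : C :=
  sqrtC (\sum_(i : tidx | i n == a) \sum_(k < p) `|S i k 0| ^+ 2).

Definition ordered_slices (S : ttensor) : Prop :=
  forall (n : 'I_N) (a b : 'I_(I n)), (a <= b)%N ->
    slice_norm S b <= slice_norm S a.
End Tubal.

Definition cunitary (R : rcfType) (p : nat) (W : 'M[R[i]]_p) : Prop :=
  W *m (map_mx (fun z : R[i] => z^*) W)^T = 1%:M /\
  (map_mx (fun z : R[i] => z^*) W)^T *m W = 1%:M.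

(* Main.v *)
Require Import Defs.
From HB Require Import structures.
From mathcomp Require Import all_boot all_order all_algebra.
From mathcomp Require Import complex.
From mathcomp Require Import ring.
Import Order.TTheory GRing.Theory Num.Theory Num.Def.
Local Open Scope ring_scope.
Set Implicit Arguments.
Unset Strict Implicit.
Unset Printing Implicit Defensive.



Lemma PSE (K : comRingType) (J : finType) (T_ : J -> finType)
  (F : forall j, T_ j -> K) :
  \sum_(t : {dffun forall j, T_ j}) \prod_j F j (t j) =
  \prod_j \sum_(x : T_ j) F j x.
Proof.
rewrite (reindex (@dffun_of_fprod J T_)) /=; last exact/onW_bij/dffun_of_fprod_bij.
pose P_ j := [ffun x : T_ j => F j x].
transitivity (\sum_(t : fprod T_) \prod_(j in J) P_ j (t j)).
  by apply: eq_bigr => t _; apply: eq_bigr => j _; rewrite !ffunE.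
rewrite big_fprod.
transitivity (\prod_j \sum_(x in tagged_with T_ j) untag 0 (P_ j) x).
  rewrite bigA_distr_big_dep; apply: eq_bigl => f; done.
apply: eq_bigr => j _; symmetry.
transitivity (\sum_(x : T_ j) P_ j x); first by apply: eq_bigr => x _; rewrite ffunE.
exact: (big_tag (fun j x => P_ j x) j).
Qed.



Lemma exch4 (K : comRingType) (T1 T2 T3 T4 : finType) (F : T1 -> T2 -> T3 -> T4 -> K) :
  \sum_a \sum_b \sum_c \sum_d F a b c d = \sum_c \sum_d \sum_a \sum_b F a b c d.
Proof.
under eq_bigr => a _ do (rewrite exchange_big /=; under eq_bigr => c _ do rewrite exchange_big /=).
rewrite exchange_big /=; apply: eq_bigr => c _.
by rewrite exchange_big.
Qed.

Lemma gsum_dl (K : comRingType) (T : finType) (a : T) (f : T -> K) :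
  \sum_x (x == a)%:R * f x = f a.
Proof.
rewrite (bigD1 a) //= eqxx mul1r big1 ?addr0 // => x.
by move=> /negbTE ->; rewrite mul0r.
Qed.

Lemma sum_and (K : comRingType) (T1 T2 : finType) (a : T1) (b : T2) (g : T1 -> T2 -> K) :
  \sum_x \sum_y ((x == a) && (y == b))%:R * g x y = g a b.
Proof.
under eq_bigr => x _ do (under eq_bigr => y _ do rewrite -mulnb natrM -mulrA;
  rewrite -big_distrr /= gsum_dl).
by rewrite gsum_dl.
Qed.

Lemma PSE2 (K : comRingType) (J : finType) (T_ : J -> finType)
  (F : forall j, T_ j -> T_ j -> K) :
  \sum_(t : {dffun forall j, T_ j}) \sum_(t' : {dffun forall j, T_ j})
     \prod_j F j (t j) (t' j) =
  \prod_j \sum_(x : T_ j) \sum_(y : T_ j) F j x y.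
Proof.
transitivity (\sum_(t : {dffun forall j, T_ j}) \prod_j \sum_(y : T_ j) F j (t j) y).
  apply: eq_bigr => t _; exact: (@PSE K J T_ (fun j y => F j (t j) y)).
exact: (@PSE K J T_ (fun j x => \sum_(y : T_ j) F j x y)).
Qed.

Local Open Scope sesquilinear_scope.

Definition sgo (C : numClosedFieldType) m (e : 'I_m -> C) (i : 'I_m) : 'I_m :=
  nth i (sort (fun x y : 'I_m => 'Re (e y) <= 'Re (e x)) (enum 'I_m)) i.

Lemma sgo_props (C : numClosedFieldType) m (e : 'I_m -> C) :
  injective (sgo e) /\
    (forall a b : 'I_m, (a <= b)%N -> 'Re (e (sgo e b)) <= 'Re (e (sgo e a))).
Proof.
pose leT := fun x y : 'I_m => 'Re (e y) <= 'Re (e x).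
pose s := sort leT (enum 'I_m).
have sz : size s = m by rewrite size_sort size_enum_ord.
have us : uniq s by rewrite sort_uniq enum_uniq.
have tot : total leT by move=> x y; rewrite /leT; apply: real_leVge; apply: Creal_Re.
have srt : sorted leT s by apply: sort_sorted.
have tr : transitive leT by move=> x y z; rewrite /leT => h1 h2; apply: le_trans h2 h1.
have rf : reflexive leT by move=> x; rewrite /leT.
rewrite /sgo -/leT -/s; split.
  move=> i j /eqP; rewrite (set_nth_default j i) ?sz //.
  by rewrite nth_uniq ?sz // => /eqP /val_inj.
move=> a b ab.
rewrite (set_nth_default a b) ?sz //.
have := sorted_leq_nth tr rf a srt; rewrite /leT; apply => //; rewrite inE sz //.
Qed.

Lemma mulmx3E (C : numClosedFieldType) m (P H : 'M[C]_m) a b :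
  (P *m H *m P ^t conjC) a b = \sum_x \sum_y P a x * H x y * (P b y)^*.
Proof.
rewrite !mxE exchange_big /=; apply: eq_bigr => y _.
rewrite mxE big_distrl /=; apply: eq_bigr => x _.
by rewrite /map_mx !mxE.
Qed.

Definition Psp (C : numClosedFieldType) m (H : 'M[C]_m) : 'M[C]_m :=
  \matrix_(a, x) spectralmx H (sgo (fun a => spectral_diag H 0 a) a) x.
Definition dsp (C : numClosedFieldType) m (H : 'M[C]_m) (a : 'I_m) : C :=
  spectral_diag H 0 (sgo (fun a => spectral_diag H 0 a) a).

Lemma spec_props (C : numClosedFieldType) m (H : 'M[C]_m) :
  (forall x y, H y x = (H x y)^*) ->
  let P := Psp H in let d := dsp H in
  (forall a b, \sum_x P a x * (P b x)^* = (a == b)%:R) /\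
  (forall a b, \sum_x P x a * (P x b)^* = (a == b)%:R) /\
  (forall a b, \sum_x \sum_y P a x * H x y * (P b y)^* = (a == b)%:R * d a) /\
  (forall a b : 'I_m, (a <= b)%N -> 'Re (d b) <= 'Re (d a)).
Proof.
move=> HH P d.
have Hn : H \is normalmx.
  apply/normalmxP; have -> : H ^t conjC = H by apply/matrixP => x y; rewrite !mxE HH conjCK.
  by [].
pose Q := spectralmx H; pose e := spectral_diag H.
have HQ : H = invmx Q *m diag_mx e *m Q by apply/orthomx_spectralP.
have Qu : Q \is unitarymx := spectral_unitarymx H.
have QQ : Q *m Q ^t conjC = 1%:M by apply/unitarymxP.
have QHQ : Q *m H *m Q ^t conjC = diag_mx e.
  rewrite HQ invmx_unitary // !mulmxA QQ mul1mx -!mulmxA QQ mulmx1 //.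
have [sginj sgord] := sgo_props (fun a => e 0 a).
have rowP : forall a b, \sum_x P a x * (P b x)^* = (a == b)%:R.
  move=> a b.
  have := congr1 (fun M : 'M[C]_m => M (sgo (fun a => e 0 a) a) (sgo (fun a => e 0 a) b)) QQ.
  rewrite !mxE (inj_eq sginj) => <-.
  by apply: eq_bigr => x _; rewrite !mxE.
split; [exact: rowP|split; [|split]].
- move=> a b.
  have PP : P *m P ^t conjC = 1%:M.
    by apply/matrixP => x y; rewrite !mxE -rowP; apply: eq_bigr => z _; rewrite /map_mx !mxE.
  have := congr1 (fun M : 'M[C]_m => (M a b)^*) (mulmx1C PP).
  rewrite !mxE rmorph_sum /= => E; rewrite -[RHS]conjC_nat -[RHS]E.
  by apply: eq_bigr => x _; rewrite /map_mx !mxE rmorphM /= conjCK mulrC.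
- move=> a b.
  have := congr1 (fun M : 'M[C]_m => M (sgo (fun a => e 0 a) a) (sgo (fun a => e 0 a) b)) QHQ.
  rewrite mulmx3E !mxE (inj_eq sginj).
  move=> E; rewrite mulr_natl -E.
  by apply: eq_bigr => x _; apply: eq_bigr => y _; rewrite !mxE.
- exact: sgord.
Qed.

Local Close Scope sesquilinear_scope.

Section Hat.
Variables (R : rcfType) (p : nat) (L : 'M[R[i]]_p).
Hypothesis Lu : L \in unitmx.
Local Notation C := R[i].

Definition hat (a : tscal R p) (k : 'I_p) : C := (L *m a) k 0.
Definition unhat (v : 'I_p -> C) : tscal R p := invmx L *m \col_k v k.

Lemma hat_unhat v k : hat (unhat v) k = v k.
Proof. by rewrite /hat /unhat mulKVmx // mxE. Qed.

Lemma hat_inj a b : (forall k, hat a k = hat b k) -> a = b.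
Proof.
move=> h; rewrite -(mulKmx Lu a) -(mulKmx Lu b); congr (_ *m _).
by apply/matrixP => k j; rewrite (ord1 j); apply: h.
Qed.

Lemma hatM a b k : hat (tmul L a b) k = hat a k * hat b k.
Proof. by rewrite /hat /tmul mulKVmx // mxE. Qed.

Lemma hatC a k : hat (tconj L a) k = (hat a k)^*.
Proof. by rewrite /hat /tconj mulKVmx // mxE. Qed.

Lemma hat1 k : hat (tone L) k = 1.
Proof. by rewrite /hat /tone mulKVmx // mxE. Qed.

Lemma hat0 k : hat 0 k = 0.
Proof. by rewrite /hat mulmx0 mxE. Qed.

Lemma hat_sum (J : Type) (r : seq J) (P : pred J) (F : J -> tscal R p) k :
  hat (\sum_(j <- r | P j) F j) k = \sum_(j <- r | P j) hat (F j) k.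
Proof.
rewrite /hat; elim/big_rec2: _ => [|j x y _ <-]; first by rewrite mulmx0 mxE.
by rewrite mulmxDr mxE.
Qed.


Lemma sum_dl {T : finType} (a : T) (f : T -> C) : \sum_x (a == x)%:R * f x = f a.
Proof.
rewrite (bigD1 a) //= eqxx mul1r big1 ?addr0 // => x.
by rewrite eq_sym => /negbTE ->; rewrite mul0r.
Qed.

Lemma sum_dr {T : finType} (a : T) (f : T -> C) : \sum_x f x * (x == a)%:R = f a.
Proof. by rewrite -[RHS](sum_dl a); apply: eq_bigr => x _; rewrite mulrC eq_sym. Qed.

Variables (N : nat) (I : 'I_N -> nat).
Local Notation tidx := (@tidx N I).

Lemma prod_ind_all (i j : tidx) : \prod_m ((i m == j m)%:R : C) = (i == j)%:R.
Proof.
have [->|ne] := eqVneq i j; first by rewrite big1 // => m _; rewrite eqxx.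
have [m hm] : exists m, i m != j m.
  apply/existsP; apply: contraNT ne; rewrite negb_exists => /forallP h.
  by apply/eqP/ffunP => m; apply/eqP; have := h m; rewrite negbK.
by rewrite (bigD1 m) //= (negbTE hm) mul0r.
Qed.

Lemma prod_ind_but n (i j : tidx) :
  \prod_(m | m != n) ((i m == j m)%:R : C) =
  ([forall m, (m != n) ==> (j m == i m)])%:R.
Proof.
case: forallP => [h|h].
  by rewrite big1 // => m mn; have := h m; rewrite mn /= eq_sym => ->.
have [m hm] : exists m, ~~ ((m != n) ==> (j m == i m)).
  apply/existsP; rewrite -negb_forall; apply/forallP => h'; exact: h.
move: hm; rewrite negb_imply => /andP[mn hm].
by rewrite (bigD1 m) //= eq_sym (negbTE hm) mul0r.
Qed.

Definition Kd (Uf : forall m : 'I_N, tmat R p (I m) (I m)) (k : 'I_p)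
  (s : seq 'I_N) (m : 'I_N) (x y : 'I_(I m)) : C :=
  if m \in s then hat (Uf m x y) k else (x == y)%:R.
Arguments Kd Uf k s m x y : clear implicits.

Lemma hat_modeprod (T : @ttensor R p N I) (Uf : forall m : 'I_N, tmat R p (I m) (I m))
  n i k :
  hat (modeprod L T (Uf n) i) k =
  \sum_(j : tidx) (\prod_m Kd Uf k [:: n] m (i m) (j m)) * hat (T j) k.
Proof.
rewrite /modeprod hat_sum big_mkcond /=; apply: eq_bigr => j _.
rewrite (bigD1 n) //= /Kd mem_seq1 eqxx.
under eq_bigr => m mn do rewrite mem_seq1 (negbTE mn).
rewrite prod_ind_but; case: forallP => _; last by rewrite mulr0 mul0r.
by rewrite (hatM (T j)) mulr1 mulrC.
Qed.


Lemma hat_fold (S : @ttensor R p N I) (Uf : forall m : 'I_N, tmat R p (I m) (I m))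
  k s : uniq s -> forall i,
  hat (foldl (fun T n => modeprod L T (Uf n)) S s i) k =
  \sum_(j : tidx) (\prod_m Kd Uf k s m (i m) (j m)) * hat (S j) k.
Proof.
elim/last_ind: s => [_ i|s n IH].
  rewrite /=; under eq_bigr => j _ do under eq_bigr => m _ do rewrite /Kd in_nil.
  under eq_bigr => j _ do rewrite prod_ind_all.
  by rewrite sum_dl.
rewrite rcons_uniq => /andP[nns us] i; rewrite foldl_rcons hat_modeprod.
under eq_bigr => j _ do rewrite IH // big_distrr /=.
rewrite exchange_big /=; apply: eq_bigr => j' _.
under eq_bigr => j _ do rewrite mulrA.
rewrite -big_distrl /=; congr (_ * _).
under eq_bigr => j _ do rewrite -big_split /=.
rewrite (@PSE _ _ (fun m => 'I_(I m)) (fun m x => Kd Uf k [:: n] m (i m) x * Kd Uf k s m x (j' m))).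
apply: eq_bigr => m _.
rewrite /Kd mem_rcons in_cons mem_seq1.
case: (eqVneq m n) => [->|mn].
  by rewrite /= (negbTE nns) sum_dr.
by rewrite /=; rewrite sum_dl.
Qed.

Lemma hat_all (S : @ttensor R p N I) (Uf : forall m : 'I_N, tmat R p (I m) (I m)) k i :
  hat (modeprod_all L S Uf i) k =
  \sum_(j : tidx) (\prod_m hat (Uf m (i m) (j m)) k) * hat (S j) k.
Proof.
rewrite /modeprod_all hat_fold ?enum_uniq //; apply: eq_bigr => j _.
by congr (_ * _); apply: eq_bigr => m _; rewrite /Kd mem_enum.
Qed.

Variable A : @ttensor R p N I.

Definition Hg (n : 'I_N) (k : 'I_p) : 'M[C]_(I n) :=
  \matrix_(x, y) \sum_(i : tidx) \sum_(i' : tidx)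
     (i n == x)%:R * (i' n == y)%:R * (\prod_(m | m != n) ((i m == i' m)%:R : C))
     * ((hat (A i) k)^* * hat (A i') k).

Lemma Hg_herm n k x y : Hg n k y x = (Hg n k x y)^*.
Proof.
rewrite !mxE rmorph_sum /= exchange_big /=; apply: eq_bigr => i _.
rewrite rmorph_sum /=; apply: eq_bigr => i' _.
rewrite !rmorphM /= !conjC_nat rmorph_prod /= conjCK.
have -> : \prod_(m | m != n) ((i' m == i m)%:R : C) =
          \prod_(m | m != n) ((i m == i' m)%:R : C)^*.
  by apply: eq_bigr => m _; rewrite conjC_nat eq_sym.
ring.
Qed.

Definition Pm n k := Psp (Hg n k).
Definition dd n k := dsp (Hg n k).
Arguments Pm n k : clear implicits.
Arguments dd n k : clear implicits.
Arguments Hg n k : clear implicits.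

Lemma Pm_row n k a b : \sum_x Pm n k a x * (Pm n k b x)^* = (a == b)%:R.
Proof. by have [h _] := spec_props (@Hg_herm n k). Qed.
Lemma Pm_col n k a b : \sum_x Pm n k x a * (Pm n k x b)^* = (a == b)%:R.
Proof. by have [_ [h _]] := spec_props (@Hg_herm n k). Qed.
Lemma Pm_diag n k a b :
  \sum_x \sum_y Pm n k a x * Hg n k x y * (Pm n k b y)^* = (a == b)%:R * dd n k a.
Proof. by have [_ [_ [h _]]] := spec_props (@Hg_herm n k). Qed.
Lemma Pm_ord n k (a b : 'I_(I n)) : (a <= b)%N -> 'Re (dd n k b) <= 'Re (dd n k a).
Proof. by have [_ [_ [_ h]]] := spec_props (@Hg_herm n k); apply: h. Qed.

Definition Uo n : tmat R p (I n) (I n) := fun a b => unhat (fun k => Pm n k b a).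
Definition hS (j : tidx) k :=
  \sum_(i : tidx) hat (A i) k * \prod_m (Pm m k (j m) (i m))^*.
Arguments Uo n : clear implicits.
Definition So : @ttensor R p N I := fun j => unhat (fun k => hS j k).

Lemma hat_tident n (a b : 'I_n) k : hat (tident L a b) k = (a == b)%:R.
Proof. by rewrite /tident; case: eqP => _; [rewrite hat1 | rewrite hat0]. Qed.

Lemma Uo_unitary n : tunitary L (Uo n).
Proof.
split => a b; apply: hat_inj => k; rewrite hat_tident /tmatmul hat_sum.
  under eq_bigr => l _ do rewrite hatM /tmatH hatC /Uo !hat_unhat.
  exact: Pm_col.
under eq_bigr => l _ do rewrite hatM /tmatH hatC /Uo !hat_unhat mulrC.
by rewrite Pm_row eq_sym.
Qed.

Lemma A_eq i : A i = modeprod_all L So (fun n => Uo n) i.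
Proof.
apply: hat_inj => k; rewrite hat_all.
under eq_bigr => j _ do (under eq_bigr => m _ do rewrite /Uo hat_unhat;
   rewrite /So hat_unhat /hS big_distrr /=).
rewrite exchange_big /=.
under eq_bigr => i' _ do under eq_bigr => j _ do rewrite mulrCA -big_split /=.
under eq_bigr => i' _ do rewrite -big_distrr /=
  (@PSE _ _ (fun m => 'I_(I m)) (fun m x => Pm m k x (i m) * (Pm m k x (i' m))^*)).
under eq_bigr => i' _ do under eq_bigr => m _ do rewrite Pm_col.
under eq_bigr => i' _ do rewrite prod_ind_all eq_sym.
by rewrite sum_dr.
Qed.

Lemma gram n (a b : 'I_(I n)) k :
  \sum_(j : tidx | j n == a)
    \sum_(j' : tidx | (j' n == b) && [forall m, (m != n) ==> (j' m == j m)])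
      (hS j k)^* * hS j' k = (a == b)%:R * dd n k a.
Proof.
pose Cn (m : 'I_N) (x y : 'I_(I m)) : C :=
  if m == n then ((val x == val a) && (val y == val b))%:R else (x == y)%:R.
transitivity (\sum_(j : tidx) \sum_(j' : tidx)
   (\prod_m Cn m (j m) (j' m)) * ((hS j k)^* * hS j' k)).
  rewrite big_mkcond /=; apply: eq_bigr => j _.
  case: (eqVneq (j n) a) => [ja|ja].
    rewrite big_mkcond /=; apply: eq_bigr => j' _.
    rewrite (bigD1 n) //= /Cn eqxx !val_eqE ja eqxx /=.
    under eq_bigr => m mn do rewrite (negbTE mn).
    rewrite prod_ind_but.
    by case: (j' n == b); case: forallP => _ /=; rewrite ?mul1r ?mul0r.
  symmetry; apply: big1 => j' _.
  by rewrite (bigD1 n) //= /Cn eqxx !val_eqE (negbTE ja) /= !mul0r.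
have eS : forall j : tidx, (hS j k)^* =
    \sum_(i : tidx) (hat (A i) k)^* * \prod_m Pm m k (j m) (i m).
  move=> j; rewrite /hS rmorph_sum /=; apply: eq_bigr => i _.
  by rewrite rmorphM rmorph_prod /=; under eq_bigr => m _ do rewrite conjCK.
transitivity (\sum_(i : tidx) \sum_(i' : tidx) ((hat (A i) k)^* * hat (A i') k) *
  \sum_(j : tidx) \sum_(j' : tidx)
    \prod_m (Cn m (j m) (j' m) * (Pm m k (j m) (i m) * (Pm m k (j' m) (i' m))^*))).
  under eq_bigr => j _ do under eq_bigr => j' _ do
    rewrite eS /hS big_distrlr /= big_distrr /=.
  under eq_bigr => j _ do under eq_bigr => j' _ do under eq_bigr => i _ do rewrite big_distrr /=.
  rewrite exch4; apply: eq_bigr => i _; apply: eq_bigr => i' _.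
  rewrite big_distrr /=; apply: eq_bigr => j _.
  rewrite big_distrr /=; apply: eq_bigr => j' _.
  rewrite !big_split /=; ring.
under eq_bigr => i _ do under eq_bigr => i' _ do rewrite
  (@PSE2 _ _ (fun m => 'I_(I m))
     (fun m x y => Cn m x y * (Pm m k x (i m) * (Pm m k y (i' m))^*))).
have eP : forall i i' : tidx,
   \prod_m \sum_(x : 'I_(I m)) \sum_(y : 'I_(I m))
      Cn m x y * (Pm m k x (i m) * (Pm m k y (i' m))^*) =
   Pm n k a (i n) * (Pm n k b (i' n))^* *
     \prod_(m | m != n) ((i m == i' m)%:R : C).
  move=> i i'; rewrite (bigD1 n) //=; congr (_ * _).
    rewrite /Cn eqxx.
    under eq_bigr => x _ do under eq_bigr => y _ do rewrite !val_eqE.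
    by rewrite sum_and.
  apply: eq_bigr => m mn; rewrite /Cn (negbTE mn).
  under eq_bigr => x _ do rewrite (sum_dl x (fun y => Pm m k x (i m) * (Pm m k y (i' m))^*)).
  exact: Pm_col.
under eq_bigr => i _ do under eq_bigr => i' _ do rewrite eP.
rewrite -Pm_diag.
symmetry.
transitivity (\sum_(x : 'I_(I n)) \sum_(y : 'I_(I n)) \sum_(i : tidx) \sum_(i' : tidx)
   ((x == i n) && (y == i' n))%:R *
   (((hat (A i) k)^* * hat (A i') k) * (Pm n k a x * (Pm n k b y)^* *
      \prod_(m | m != n) ((i m == i' m)%:R : C)))).
  apply: eq_bigr => x _; apply: eq_bigr => y _.
  rewrite [Hg n k x y]mxE big_distrr big_distrl /=; apply: eq_bigr => i _.
  rewrite big_distrr big_distrl /=; apply: eq_bigr => i' _.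
  rewrite -mulnb natrM (eq_sym x) (eq_sym y); ring.
rewrite exch4; apply: eq_bigr => i _; apply: eq_bigr => i' _.
by rewrite sum_and.
Qed.



Lemma So_orth : all_orthogonal L So.
Proof.
move=> n a b ab; apply: hat_inj => k; rewrite hat0 hat_sum.
under eq_bigr => j _ do (rewrite hat_sum; under eq_bigr => j' _ do rewrite hatM hatC /So !hat_unhat).
by rewrite gram (negbTE ab) mul0r.
Qed.

Lemma diag_sum n a k :
  \sum_(j : tidx | j n == a) `|hS j k| ^+ 2 = dd n k a.
Proof.
have := gram a a k; rewrite eqxx mul1r => <-; apply: eq_bigr => j ja.
rewrite (big_pred1 j); first by rewrite normCK mulrC.
move=> j' /=; apply/idP/eqP => [/andP[ja' /forallP h]|->].
  apply/ffunP => m; case: (eqVneq m n) => [->|mn].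
    by rewrite (eqP ja') (eqP ja).
  by have := h m; rewrite mn /= => /eqP.
by rewrite ja; apply/forallP => m; apply/implyP.
Qed.

Lemma dd_ge0 n k a : 0 <= dd n k a.
Proof. by rewrite -diag_sum; apply: sumr_ge0 => j _; apply: exprn_ge0. Qed.

Local Open Scope sesquilinear_scope.

Lemma sqn m (u : 'cV[C]_m) : \sum_k `|u k 0| ^+ 2 = (u ^t conjC *m u) 0 0.
Proof.
rewrite mxE; apply: eq_bigr => k _.
by rewrite /map_mx !mxE normCK mulrC.
Qed.

Lemma unhat_norm (c : C) (W : 'M[C]_p) (v : 'I_p -> C) :
  cunitary W -> L = c *: W ->
  \sum_k `|unhat v k 0| ^+ 2 = (`|c| ^+ 2)^-1 * \sum_k `|v k| ^+ 2.
Proof.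
move=> [W1 _] HL.
have Wu : W \is unitarymx by apply/unitarymxP; rewrite -map_trmx.
have iL : invmx L = c^-1 *: W ^t conjC.
  by rewrite HL invmxZ -?HL // invmx_unitary.
rewrite /unhat iL -scalemxAl.
under eq_bigr => k _ do rewrite mxE normrM exprMn.
rewrite -big_distrr /= normfV exprVn; congr (_ * _).
rewrite sqn trmx_mul map_mxM trmxCK mulmxA -(mulmxA _ W) (unitarymxP Wu) mulmx1 -sqn.
by apply: eq_bigr => k _; rewrite mxE.
Qed.

Local Close Scope sesquilinear_scope.

Lemma So_ordered (c : C) W : cunitary W -> L = c *: W -> ordered_slices So.
Proof.
move=> Wu HL n a b ab; rewrite /slice_norm.
have E : forall x, \sum_(i : tidx | i n == x) \sum_k `|So i k 0| ^+ 2 =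
    (`|c| ^+ 2)^-1 * \sum_k dd n k x.
  move=> x; under eq_bigr => i _ do rewrite /So (unhat_norm _ Wu HL).
  rewrite -big_distrr /=; congr (_ * _); rewrite exchange_big /=.
  by apply: eq_bigr => k _; exact: diag_sum.
have ge : forall x, 0 <= (`|c| ^+ 2)^-1 * \sum_k dd n k x.
  by move=> x; rewrite mulr_ge0 ?invr_ge0 ?exprn_ge0 // sumr_ge0 // => k _; apply: dd_ge0.
rewrite !E ler_sqrtC ?nnegrE ?ge //.
apply: ler_wpM2l; first by rewrite invr_ge0 exprn_ge0.
apply: ler_sum => k _; have := Pm_ord k ab.
by rewrite !(Creal_ReP _ (ger0_real (dd_ge0 _ _))).
Qed.

End Hat.

Theorem theorem4p2 (R : rcfType) (p : nat) (L : 'M[R[i]]_p)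
    (N : nat) (I : 'I_N -> nat) (A : @ttensor R p N I) :
  (0 < p)%N -> L \in unitmx ->
  (exists (S : @ttensor R p N I) (U : forall n : 'I_N, tmat R p (I n) (I n)),
      (forall n, tunitary L (U n)) /\ all_orthogonal L S /\
      (forall i, A i = modeprod_all L S U i)) /\
  ((exists (c : R[i]) (W : 'M[R[i]]_p), c != 0 /\ cunitary W /\ L = c *: W) ->
    exists (S : @ttensor R p N I) (U : forall n : 'I_N, tmat R p (I n) (I n)),
      (forall n, tunitary L (U n)) /\ all_orthogonal L S /\
      ordered_slices S /\
      (forall i, A i = modeprod_all L S U i)).
Proof.
move=> _ Lu; split.
  exists (So L A), (fun n => Uo L A (n:=n)); split; first by move=> n; exact: Uo_unitary.
  by split; [exact: So_orth | move=> i; exact: A_eq].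
move=> [c [W [_ [Wu HL]]]].
exists (So L A), (fun n => Uo L A (n:=n)); split; first by move=> n; exact: Uo_unitary.
split; first exact: So_orth.
split; first exact: (So_ordered Lu A Wu HL).
by move=> i; exact: A_eq.
Qed.
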